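(* Let $V:\mathbb{R}\to\mathbb{R}$ be continuous and $T$-periodic and suppose that the monodromy of the Hill equation $\ddot u+V(t)u=0$ is elliptic. Then there exist real solutions $u_1,u_2$ with Wronskian $u_1\dot u_2-u_2\dot u_1=1$ such that $w(t)=\sqrt{u_1(t)^2+u_2(t)^2}$ is a positive $T$-periodic solution of the Ermakov–Pinney equation $\ddot w+V(t)w=w^{-3}$. Moreover, the rotation number $$\rho=\lim_{t\to\infty}\frac{\phi(t)-\phi(0)}{t}$$ of the flow on the torus $\dot\phi=(V(t)+1)+(V(t)-1)\cos\phi$ satisfies $$\rho=\lim_{t\to\infty}\frac{2}{t}\int_0^t\frac{ds}{u_1(s)^2+u_2(s)^2}=\frac{2\theta_H}{T},\qquad \theta_H:=\int_0^T\frac{dt}{w(t)^2}.$$ In particular, for $T=2\pi$, $\rho=\Delta/\pi$ where $\Delta=\int_0^{2\pi}\frac{dt}{u_1(t)^2+u_2(t)^2}$.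
   Context: The monodromy is the linear map $u(t)\mapsto u(t+T)$ on real solutions; it is elliptic if its trace has absolute value $<2$. The equation $\dot\phi=(V+1)+(V-1)\cos\phi$ is the equation satisfied by $\phi=2\arg(u-i\dot u)$ (continuous lift) for solutions $u$ of the Hill equation; $\phi(t)$ is any real-valued solution (the limit exists and is independent of the solution). The quantity $\theta_H$ is the non-adiabatic Hannay angle of the parametric oscillator $H=\tfrac12p^2+\tfrac12V(t)u^2$. *)

(* Defs.v *)
From Stdlib Require Import Reals.
From Coquelicot Require Import Coquelicot.
Open Scope R_scope.

Definition hill_sol (V u : R -> R) : Prop :=
  forall t, is_derive u t (Derive u t) /\
            is_derive (Derive u) t (- (V t * u t)).

(* The monodromy u(t) |-> u(t+T) of the Hill equation is elliptic:
   |trace| < 2.  Its trace is computed in the canonical basis of normalized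
   solutions y1 (y1(0)=1, y1'(0)=0), y2 (y2(0)=0, y2'(0)=1), in which the
   monodromy matrix is [[y1(T), y2(T)], [y1'(T), y2'(T)]]. *)
Definition monodromy_elliptic (V : R -> R) (T : R) : Prop :=
  exists y1 y2 : R -> R,
    hill_sol V y1 /\ hill_sol V y2 /\
    y1 0 = 1 /\ Derive y1 0 = 0 /\ y2 0 = 0 /\ Derive y2 0 = 1 /\
    Rabs (y1 T + Derive y2 T) < 2.

Definition ermakov_pinney_sol (V w : R -> R) : Prop :=
  forall t, is_derive w t (Derive w t) /\
            is_derive (Derive w) t (- (V t * w t) + / (w t ^ 3)).

Definition torus_flow_sol (V phi : R -> R) : Prop :=
  forall t, is_derive phi t ((V t + 1) + (V t - 1) * cos (phi t)).

(* Main.v *)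
From Stdlib Require Import Reals Lra.
Require Import Defs.
From Coquelicot Require Import Coquelicot.
Open Scope R_scope.

Lemma deriv_cont_pt (f : R -> R) (x l : R) : is_derive f x l -> continuity_pt f x.
Proof.
  intro H. apply continuity_pt_filterlim. apply (ex_derive_continuous (V:=R_NormedModule) f x). eexists; exact H.
Qed.

Lemma deriv_cont (f : R -> R) (x l : R) : is_derive f x l -> continuous f x.
Proof. intro H. apply (ex_derive_continuous (K:=R_AbsRing) (V:=R_NormedModule) f x). eexists; exact H. Qed.

Lemma mono_le f df a b : a <= b ->
  (forall x, a <= x <= b -> is_derive f x (df x)) ->
  (forall x, a <= x <= b -> 0 <= df x) -> f a <= f b.
Proof.
  intros Hab Hd Hp.
  destruct (MVT_gen f a b df) as [c [Hc E]].
  - intros x Hx. apply Hd. rewrite Rmin_left in Hx by lra. rewrite Rmax_right in Hx by lra. lra.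
  - intros x Hx. rewrite Rmin_left in Hx by lra. rewrite Rmax_right in Hx by lra.
    apply (deriv_cont_pt _ _ (df x)). apply Hd; lra.
  - rewrite Rmin_left in Hc by lra. rewrite Rmax_right in Hc by lra.
    assert (0 <= df c) by (apply Hp; lra). nra.
Qed.

Lemma const_deriv f : (forall x, is_derive f x 0) -> forall x y, f x = f y.
Proof.
  intros Hd x y.
  destruct (MVT_gen f x y (fun _ => 0)) as [c [_ E]].
  - intros; apply Hd.
  - intros; apply (deriv_cont_pt _ _ 0); apply Hd.
  - lra.
Qed.

Lemma gronwall g dg a b K : a <= b ->
  (forall x, a <= x <= b -> is_derive g x (dg x)) ->
  (forall x, a <= x <= b -> Rabs (dg x) <= K * g x) ->
  (forall x, a <= x <= b -> 0 <= g x) ->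
  (g a = 0 -> g b = 0) /\ (g b = 0 -> g a = 0).
Proof.
  intros Hab Hd Hb Hp. split; intro H0.
  - pose (h := fun x => - (g x * exp (- (K * x)))).
    assert (h a <= h b).
    { apply (mono_le h (fun x => - (dg x * exp (-(K*x)) - K * g x * exp (-(K*x))))); auto.
      - intros x Hx. unfold h. specialize (Hd x Hx).
        auto_derive. eexists; exact Hd. replace (Derive (fun x0 => g x0) x) with (dg x) by (symmetry; apply is_derive_unique; exact Hd). ring.
      - intros x Hx. specialize (Hb x Hx). specialize (exp_pos (-(K*x))). intro.
        assert (dg x <= K * g x) by (eapply Rle_trans; [apply Rle_abs|exact Hb]).
        nra. }
    unfold h in H. rewrite H0 in H. specialize (exp_pos (-(K*b))). specialize (Hp b (conj Hab (Rle_refl b))).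
    intro. nra.
  - pose (h := fun x => (g x * exp (K * x))).
    assert (h a <= h b).
    { apply (mono_le h (fun x => dg x * exp (K*x) + K * g x * exp (K*x))); auto.
      - intros x Hx. unfold h. specialize (Hd x Hx).
        auto_derive. eexists; exact Hd. replace (Derive (fun x0 => g x0) x) with (dg x) by (symmetry; apply is_derive_unique; exact Hd). ring.
      - intros x Hx. specialize (Hb x Hx). specialize (exp_pos (K*x)). intro.
        assert (- dg x <= K * g x) by (apply (Rle_trans _ (Rabs (- dg x))); [apply Rle_abs|rewrite Rabs_Ropp; exact Hb]).
        nra. }
    unfold h in H. rewrite H0 in H. specialize (exp_pos (K*a)). specialize (Hp a (conj (Rle_refl a) Hab)).
    intro. nra.
Qed.

Lemma lim_lin (g : R -> R) L B : (forall t, 0 <= t -> Rabs (g t - L*t) <= B) ->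
  is_lim (fun t => g t / t) p_infty L.
Proof.
  intro H. apply is_lim_spec. intro eps. simpl.
  exists (Rabs B / eps + 1). intros x Hx.
  assert (HB : 0 <= Rabs B / eps) by (apply Rdiv_le_0_compat; [apply Rabs_pos| apply cond_pos]).
  assert (Hx0 : 0 < x) by lra.
  replace (g x / x - L) with ((g x - L * x) / x) by (field; lra).
  unfold Rdiv. rewrite Rabs_mult. rewrite (Rabs_right (/ x)) by (left; apply Rinv_0_lt_compat; lra).
  specialize (H x (Rlt_le _ _ Hx0)).
  assert (Rabs B / eps < x) by lra.
  assert (Rabs B < eps * x).
  { apply (Rmult_lt_compat_l eps) in H0; [| apply cond_pos]. unfold Rdiv in H0.
    replace (eps * (Rabs B * / eps)) with (Rabs B) in H0 by (field; apply Rgt_not_eq, cond_pos). lra. }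
  apply (Rmult_lt_reg_r x); auto. rewrite Rmult_assoc, Rinv_l by lra. 
  assert (B <= Rabs B) by apply Rle_abs. lra.
Qed.

Lemma cos_lip a b : Rabs (cos a - cos b) <= Rabs (a - b).
Proof.
  destruct (MVT_gen cos b a (fun x => - sin x)) as [c [_ E]].
  - intros; apply is_derive_cos.
  - intros; apply continuity_cos.
  - rewrite E, Rabs_mult, Rabs_Ropp. 
    assert (Rabs (sin c) <= 1) by (apply Rabs_le; apply SIN_bound).
    assert (0 <= Rabs (a - b)) by apply Rabs_pos. nra.
Qed.
Lemma bound2 x y z K : Rabs z <= K -> Rabs (2*x*y*z) <= K*(x^2+y^2).
Proof.
  intro H. rewrite !Rabs_mult. rewrite (Rabs_right 2) by lra.
  assert (2 * Rabs x * Rabs y <= x^2 + y^2).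
  { assert (Rabs x ^2 = x^2) by (rewrite <- (pow2_abs x); reflexivity).
    assert (Rabs y ^2 = y^2) by (rewrite <- (pow2_abs y); reflexivity).
    assert (0 <= (Rabs x - Rabs y)^2) by apply pow2_ge_0. nra. }
  assert (0 <= Rabs z) by apply Rabs_pos.
  assert (0 <= Rabs x) by apply Rabs_pos.
  assert (0 <= Rabs y) by apply Rabs_pos.
  assert (2 * Rabs x * Rabs y * Rabs z <= (x^2+y^2) * Rabs z) by (apply Rmult_le_compat_r; auto).
  assert ((x^2+y^2) * Rabs z <= (x^2+y^2) * K) by (apply Rmult_le_compat_l; nra).
  nra.
Qed.

Lemma cont_pt_of (V : R -> R) x : continuous V x -> continuity_pt V x.
Proof. intro H. apply continuity_pt_filterlim. exact H. Qed.

Lemma bound_on (V : R -> R) a b : a <= b -> (forall t, continuous V t) ->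
  exists K, forall x, a <= x <= b -> Rabs (V x) <= K.
Proof.
  intros Hab HV.
  destruct (continuity_ab_maj (fun x => Rabs (V x)) a b Hab) as [M [HM _]].
  - intros c _. apply (continuity_pt_comp V Rabs). apply cont_pt_of, HV. apply Rcontinuity_abs.
  - exists (Rabs (V M)). intros; apply HM; auto.
Qed.

Ltac fixD := repeat match goal with |- context [Derive (fun x => ?F x) ?t] => change (Derive (fun x => F x) t) with (Derive F t) end.

Lemma hill_unique V e : (forall t, continuous V t) -> hill_sol V e -> e 0 = 0 -> Derive e 0 = 0 ->
  forall t, e t = 0.
Proof.
  intros HV He H0 H0'.
  assert (HV1 : forall t, continuous (fun x => 1 - V x) t).
  { intro t. apply (continuous_minus (fun _ => 1) V). apply continuous_const. apply HV. }
  pose (g := fun x => e x ^ 2 + Derive e x ^ 2).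
  pose (dg := fun x => 2 * e x * Derive e x + 2 * Derive e x * (- (V x * e x))).
  assert (Hd : forall x, is_derive g x (dg x)).
  { intro x. unfold g, dg. destruct (He x) as [Ha Hb].
    auto_derive. split. eexists; exact Ha. split. eexists; exact Hb. auto.
    rewrite (is_derive_unique (fun y : R => e y) _ _ Ha), (is_derive_unique (fun y : R => Derive e y) _ _ Hb). ring. }
  assert (Hg0 : g 0 = 0) by (unfold g; rewrite H0, H0'; ring).
  assert (Hgp : forall x, 0 <= g x) by (intro x; unfold g; nra).
  intro t.
  assert (g t = 0).
  { destruct (Rle_dec 0 t) as [Ht|Ht].
    - destruct (bound_on (fun x => 1 - V x) 0 t Ht HV1) as [K HK].
      assert (HB : forall x, 0 <= x <= t -> Rabs (dg x) <= K * g x).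
      { intros x Hx. unfold dg, g. replace (2 * e x * Derive e x + 2 * Derive e x * - (V x * e x)) with (2 * e x * Derive e x * (1 - V x)) by ring.
        apply bound2. apply HK; auto. }
      apply (proj1 (gronwall g dg 0 t K Ht (fun x _ => Hd x) HB (fun x _ => Hgp x))); auto.
    - assert (Ht' : t <= 0) by lra.
      destruct (bound_on (fun x => 1 - V x) t 0 Ht' HV1) as [K HK].
      assert (HB : forall x, t <= x <= 0 -> Rabs (dg x) <= K * g x).
      { intros x Hx. unfold dg, g. replace (2 * e x * Derive e x + 2 * Derive e x * - (V x * e x)) with (2 * e x * Derive e x * (1 - V x)) by ring.
        apply bound2. apply HK; auto. }
      apply (proj2 (gronwall g dg t 0 K Ht' (fun x _ => Hd x) HB (fun x _ => Hgp x))); auto. }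
  unfold g in H. nra.
Qed.

Lemma is_derive_eq (f : R -> R) x l l' : is_derive f x l -> l = l' -> is_derive f x l'.
Proof. intros H E; subst; exact H. Qed.

Lemma hill_comb V f g a b : hill_sol V f -> hill_sol V g ->
  (forall t, Derive (fun t => a * f t + b * g t) t = a * Derive f t + b * Derive g t) /\
  hill_sol V (fun t => a * f t + b * g t).
Proof.
  intros Hf Hg.
  assert (H1 : forall t, is_derive (fun t => a * f t + b * g t) t (a * Derive f t + b * Derive g t)).
  { intro t. apply (is_derive_plus (fun t => a * f t) (fun t => b * g t)).
    apply (is_derive_scal f). apply Hf. apply (is_derive_scal g). apply Hg. }
  assert (H2 : forall t, Derive (fun t => a * f t + b * g t) t = a * Derive f t + b * Derive g t)
    by (intro t; apply is_derive_unique, H1).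
  split; auto. intro t. split.
  - rewrite H2. apply H1.
  - apply (is_derive_ext (fun t => a * Derive f t + b * Derive g t)).
    intro; rewrite H2; auto.
    replace (- (V t * (a * f t + b * g t))) with (a * (- (V t * f t)) + b * (- (V t * g t))) by ring.
    apply (is_derive_plus (fun t => a * Derive f t) (fun t => b * Derive g t)).
    apply (is_derive_scal (Derive f)). apply Hf. apply (is_derive_scal (Derive g)). apply Hg.
Qed.

Lemma hill_shift V f T : (forall t, V (t + T) = V t) -> hill_sol V f ->
  (forall t, Derive (fun t => f (t + T)) t = Derive f (t + T)) /\ hill_sol V (fun t => f (t + T)).
Proof.
  intros HP Hf.
  assert (H1 : forall (h : R -> R) l, (forall t, is_derive h t (l t)) -> forall t, is_derive (fun t => h (t + T)) t (l (t + T))).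
  { intros h l Hh t. assert (E := is_derive_comp h (fun t => t + T) t (l (t+T)) 1 (Hh (t+T))).
    assert (HD : is_derive (fun t => t + T) t 1).
    { auto_derive; auto; ring. }
    specialize (E HD). apply (is_derive_eq _ _ _ _ E). unfold scal; simpl; unfold mult; simpl. ring. }
  assert (H2 : forall t, Derive (fun t => f (t + T)) t = Derive f (t + T))
    by (intro t; apply is_derive_unique, (H1 f (Derive f)), Hf).
  split; auto. intro t. split.
  - rewrite H2. apply (H1 f (Derive f)). apply Hf.
  - apply (is_derive_ext (fun t => Derive f (t + T))). intro; rewrite H2; auto.
    rewrite <- HP. apply (H1 (Derive f) (fun t => - (V t * f t))). apply Hf.
Qed.

Lemma deriv_RInt (f : R -> R) : (forall t, continuous f t) ->
  forall t, is_derive (fun t => RInt f 0 t) t (f t).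
Proof.
  intros Hf t. apply (is_derive_RInt f (fun t => RInt f 0 t) 0 t).
  - apply filter_forall. intro x. apply (RInt_correct (V:=R_CompleteNormedModule)), (ex_RInt_continuous (V:=R_CompleteNormedModule)). intros; apply Hf.
  - apply Hf.
Qed.

Lemma RInt0 (f : R -> R) : RInt f 0 0 = 0.
Proof. rewrite RInt_point. reflexivity. Qed.

Lemma torus_shift V chi n : torus_flow_sol V chi -> torus_flow_sol V (fun t => chi t + 2 * INR n * PI).
Proof.
  intros H t. rewrite cos_period.
  apply (is_derive_eq _ _ (plus ((V t + 1) + (V t - 1) * cos (chi t)) 0)).
  apply (is_derive_plus chi (fun _ => 2 * INR n * PI)). apply H. auto_derive; auto.
  unfold plus; simpl; ring.
Qed.

Lemma torus_nc V phi zeta : (forall t, continuous V t) -> torus_flow_sol V phi -> torus_flow_sol V zeta ->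
  phi 0 < zeta 0 -> forall t, 0 <= t -> phi t < zeta t.
Proof.
  intros HV Hp Hz H0 t Ht.
  destruct (Rlt_le_dec (phi t) (zeta t)) as [|Hle]; auto. exfalso.
  assert (Hd : forall x, is_derive (fun x => zeta x - phi x) x
     (((V x + 1) + (V x - 1) * cos (zeta x)) - ((V x + 1) + (V x - 1) * cos (phi x)))).
  { intro x. apply (is_derive_minus zeta phi). apply Hz. apply Hp. }
  assert (Hz1 : exists z, 0 <= z <= t /\ phi z = zeta z).
  { destruct (Req_dec (phi t) (zeta t)) as [E|NE].
    - exists t; split; auto; lra.
    - assert (0 < t).
      { destruct (Req_dec t 0); [subst; lra| lra]. }
      destruct (IVT (fun x => - (zeta x - phi x)) 0 t) as [z [Hz1 Hz2]]; try lra.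
      + intro x. apply continuity_pt_opp. eapply deriv_cont_pt. apply Hd.
      + exists z; split; auto; lra. }
  destruct Hz1 as [z [Hzr Hzeq]].
  destruct (bound_on (fun x => V x - 1) 0 z (proj1 Hzr)) as [K HK].
  { intro x. apply (continuous_minus V (fun _ => 1)). apply HV. apply continuous_const. }
  pose (g := fun x => (phi x - zeta x)^2).
  pose (dg := fun x => 2 * (phi x - zeta x) * ((V x - 1) * (cos (phi x) - cos (zeta x)))).
  assert (Hdg : forall x, is_derive g x (dg x)).
  { intro x. unfold g, dg. 
    apply (is_derive_eq _ _ (INR 2 * (((V x + 1) + (V x - 1) * cos (phi x)) - ((V x + 1) + (V x - 1) * cos (zeta x))) * (phi x - zeta x)^(pred 2))).
    apply (is_derive_pow (fun x => phi x - zeta x) 2 x). apply (is_derive_minus phi zeta). apply Hp. apply Hz.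
    simpl. ring. }
  assert (HB : forall x, 0 <= x <= z -> Rabs (dg x) <= (2*K) * g x).
  { intros x Hx. unfold dg, g. specialize (HK x Hx). 
    rewrite !Rabs_mult. rewrite (Rabs_right 2) by lra.
    assert (Hc := cos_lip (phi x) (zeta x)).
    assert (0 <= Rabs (phi x - zeta x)) by apply Rabs_pos.
    assert (0 <= Rabs (V x - 1)) by apply Rabs_pos.
    assert (0 <= Rabs (cos (phi x) - cos (zeta x))) by apply Rabs_pos.
    assert (E : (phi x - zeta x)^2 = Rabs (phi x - zeta x) * Rabs (phi x - zeta x)) by (rewrite <- Rabs_mult; rewrite Rabs_right; [ring | apply Rle_ge, Rle_0_sqr]).
    rewrite E.
    assert (Rabs (V x - 1) * Rabs (cos (phi x) - cos (zeta x)) <= K * Rabs (phi x - zeta x)).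
    { apply Rmult_le_compat; auto. }
    assert (2 * Rabs (phi x - zeta x) * (Rabs (V x - 1) * Rabs (cos (phi x) - cos (zeta x))) <= 2 * Rabs (phi x - zeta x) * (K * Rabs (phi x - zeta x))).
    { apply Rmult_le_compat_l; lra. }
    eapply Rle_trans. exact H4. right; ring. }
  assert (Hgz : g z = 0) by (unfold g; rewrite Hzeq; ring).
  assert (Hg0 := proj2 (gronwall g dg 0 z (2*K) (proj1 Hzr) (fun x _ => Hdg x) HB (fun x _ => pow2_ge_0 _)) Hgz).
  unfold g in Hg0. assert (phi 0 = zeta 0) by nra. lra.
Qed.

Lemma floq_alg a b c d s k Y1 Y2 : b <> 0 -> s <> 0 -> a*d - b*c = 1 -> s^2 = 1 - ((a+d)/2)^2 ->
  ((-k*b/s)*(a*Y1 + c*Y2) + (k*(a-d)/(2*s))*(b*Y1+d*Y2))^2 + (0*(a*Y1+c*Y2) + k*(b*Y1+d*Y2))^2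
  = ((-k*b/s)*Y1+(k*(a-d)/(2*s))*Y2)^2 + (0*Y1 + k*Y2)^2.
Proof.
  intros Hb Hs Hd Hs2.
  assert (Hc : c = (a*d-1)/b) by (field_simplify; [lra| auto] || (apply (Rmult_eq_reg_l b); [field_simplify; lra|auto])).
  subst c.
  apply Rminus_diag_uniq.
  replace (_ - _) with ((k^2/s^2)*(((a+d)/2)^2 + s^2 - 1)*(b^2*Y1^2 + 2*b*d*Y1*Y2 + (d^2-1)*Y2^2)) by (field; auto).
  rewrite Hs2. ring.
Qed.

Lemma EP_alg x1 x2 d1 d2 v r : 0 < r -> r^2 = x1^2+x2^2 -> x1*d2 - x2*d1 = 1 ->
  ((d1*d1 + x1*(-(v*x1)) + (d2*d2 + x2*(-(v*x2)))) * r - (x1*d1+x2*d2) * ((x1*d1+x2*d2)/r)) / r^2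
  = -(v*r) + /r^3.
Proof.
  intros Hr Hr2 W.
  assert (r <> 0) by lra.
  replace (((d1*d1 + x1*(-(v*x1)) + (d2*d2 + x2*(-(v*x2)))) * r - (x1*d1+x2*d2) * ((x1*d1+x2*d2)/r)) / r^2)
    with (((d1*d1 + d2*d2) * r^2 - v * (x1^2+x2^2) * r^2 - (x1*d1+x2*d2)^2) / r^3) by (field; auto).
  rewrite Hr2.
  replace ((d1*d1 + d2*d2) * (x1^2+x2^2) - v * (x1^2+x2^2) * (x1^2+x2^2) - (x1*d1+x2*d2)^2)
    with ((x1*d2 - x2*d1)^2 - v * (x1^2+x2^2)^2) by ring.
  rewrite W, <- Hr2. field; auto.
Qed.

Lemma lift_alg x1 x2 d1 d2 c s r : 0 < r -> r^2 = x1^2+x2^2 -> x1*d2 - x2*d1 = 1 ->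
  ((d1*c + d2*s + (-x1*s + x2*c)/(x1^2+x2^2)) * r - (x1*c + x2*s) * ((x1*d1 + x2*d2)/r)) / r^2 = 0 /\
  ((-d1*s + d2*c - (x1*c + x2*s)/(x1^2+x2^2)) * r - (-x1*s + x2*c) * ((x1*d1 + x2*d2)/r)) / r^2 = 0.
Proof.
  intros Hr Hr2 W. assert (r <> 0) by lra.
  assert (HS : x1^2+x2^2 <> 0) by (rewrite <- Hr2; apply pow_nonzero; auto).
  split.
  - replace (((d1*c + d2*s + (-x1*s + x2*c)/(x1^2+x2^2)) * r - (x1*c + x2*s) * ((x1*d1 + x2*d2)/r)) / r^2)
      with (((d1*c + d2*s)*r^2 + (-x1*s + x2*c)*(r^2/(x1^2+x2^2)) - (x1*c + x2*s) * (x1*d1 + x2*d2))/r^3) by (field; auto).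
    rewrite Hr2. replace ((x1^2+x2^2)/(x1^2+x2^2)) with (x1*d2 - x2*d1) by (rewrite W; field; auto).
    replace ((d1 * c + d2 * s) * (x1 ^ 2 + x2 ^ 2) + (- x1 * s + x2 * c) * (x1 * d2 - x2 * d1) - (x1 * c + x2 * s) * (x1 * d1 + x2 * d2)) with 0 by ring.
    field; auto.
  - replace (((-d1*s + d2*c - (x1*c + x2*s)/(x1^2+x2^2)) * r - (-x1*s + x2*c) * ((x1*d1 + x2*d2)/r)) / r^2)
      with (((-d1*s + d2*c)*r^2 - (x1*c + x2*s)*(r^2/(x1^2+x2^2)) - (-x1*s + x2*c) * (x1*d1 + x2*d2))/r^3) by (field; auto).
    rewrite Hr2. replace ((x1^2+x2^2)/(x1^2+x2^2)) with (x1*d2 - x2*d1) by (rewrite W; field; auto).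
    replace ((-d1*s + d2*c) * (x1 ^ 2 + x2 ^ 2) - (x1 * c + x2 * s) * (x1 * d2 - x2 * d1) - (- x1 * s + x2 * c) * (x1 * d1 + x2 * d2)) with 0 by ring.
    field; auto.
Qed.

Lemma lift2_alg x d v c s r : 0 < r -> r^2 = x^2+d^2 ->
  let h := (v*x^2 + d^2)/(x^2+d^2) in
  ((d*c - x*s*h + v*x*s - d*c*h) * r - (x*c - d*s) * ((x*d + d*(-(v*x)))/r)) / r^2 = 0 /\
  ((d*s + x*c*h - v*x*c - d*s*h) * r - (x*s + d*c) * ((x*d + d*(-(v*x)))/r)) / r^2 = 0.
Proof.
  intros Hr Hr2 h. assert (r <> 0) by lra.
  assert (HS : x^2+d^2 <> 0) by (rewrite <- Hr2; apply pow_nonzero; auto).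
  unfold h. split.
  - replace (((d*c - x*s*((v*x^2 + d^2)/(x^2+d^2)) + v*x*s - d*c*((v*x^2 + d^2)/(x^2+d^2))) * r - (x*c - d*s) * ((x*d + d*(-(v*x)))/r)) / r^2)
      with (((d*c + v*x*s)*r^2 - (x*s + d*c)*(v*x^2 + d^2)*(r^2/(x^2+d^2)) - (x*c - d*s) * (x*d + d*(-(v*x))))/r^3) by (field; auto).
    rewrite Hr2. replace ((x^2+d^2)/(x^2+d^2)) with 1 by (field; auto).
    replace ((d*c + v*x*s)*(x^2+d^2) - (x*s + d*c)*(v*x^2 + d^2)*1 - (x*c - d*s) * (x*d + d*(-(v*x)))) with 0 by ring.
    field; auto.
  - replace (((d*s + x*c*((v*x^2 + d^2)/(x^2+d^2)) - v*x*c - d*s*((v*x^2 + d^2)/(x^2+d^2))) * r - (x*s + d*c) * ((x*d + d*(-(v*x)))/r)) / r^2)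
      with (((d*s - v*x*c)*r^2 + (x*c - d*s)*(v*x^2 + d^2)*(r^2/(x^2+d^2)) - (x*s + d*c) * (x*d + d*(-(v*x))))/r^3) by (field; auto).
    rewrite Hr2. replace ((x^2+d^2)/(x^2+d^2)) with 1 by (field; auto).
    replace ((d*s - v*x*c)*(x^2+d^2) + (x*c - d*s)*(v*x^2 + d^2)*1 - (x*s + d*c) * (x*d + d*(-(v*x)))) with 0 by ring.
    field; auto.
Qed.

Lemma deriv_shift (h l : R -> R) T : (forall t, is_derive h t (l t)) -> forall t, is_derive (fun t => h (t + T)) t (l (t + T)).
Proof.
  intros Hh t. assert (E := is_derive_comp h (fun t => t + T) t (l (t+T)) 1 (Hh (t+T))).
  assert (HD : is_derive (fun t => t + T) t 1) by (auto_derive; auto; ring).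
  specialize (E HD). apply (is_derive_eq _ _ _ _ E). unfold scal; simpl; unfold mult; simpl. ring.
Qed.

Lemma cont_mult (f g : R -> R) x : continuous f x -> continuous g x -> continuous (fun y => f y * g y) x.
Proof. intros. apply (continuous_mult (K:=R_AbsRing) f g x); auto. Qed.

Lemma cont_plus (f g : R -> R) x : continuous f x -> continuous g x -> continuous (fun y => f y + g y) x.
Proof. intros. apply (continuous_plus (V:=R_NormedModule) f g x); auto. Qed.

Lemma ex_cont (f : R -> R) x : ex_derive f x -> continuous f x.
Proof. intros [l H]. apply (deriv_cont f x l H). Qed.

Lemma periodic_bound (F : R -> R) T th : 0 < T -> 0 <= th -> F 0 = 0 ->
  (forall t, F (t + T) = F t + th) -> (forall t, 0 <= t <= T -> 0 <= F t <= th) ->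
  forall t, 0 <= t -> Rabs (F t - th / T * t) <= th.
Proof.
  intros HT Hth H0 HP HB.
  assert (Hn : forall n : nat, forall t, 0 <= t <= INR n * T -> Rabs (F t - th / T * t) <= th).
  { induction n as [|n IH]; intros t Ht.
    - simpl in Ht. assert (t = 0) by lra. subst. rewrite H0. rewrite Rmult_0_r, Rminus_0_r, Rabs_R0. auto.
    - rewrite S_INR in Ht. destruct (Rle_dec t T) as [Hle|Hgt].
      + specialize (HB t (conj (proj1 Ht) Hle)).
        assert (0 <= th / T * t <= th).
        { split. apply Rmult_le_pos; [apply Rdiv_le_0_compat|]; lra.
          replace th with (th / T * T) at 2 by (field; lra). apply Rmult_le_compat_l; [apply Rdiv_le_0_compat|]; lra. }
        apply Rabs_le. lra.
      + replace (F t - th / T * t) with (F (t - T) - th / T * (t - T)).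
        apply IH. lra.
        assert (E := HP (t - T)). replace (t - T + T) with t in E by ring. rewrite E. field. lra. }
  intros t Ht. destruct (INR_archimed T t HT) as [n Hn']. apply (Hn n). lra.
Qed.

Lemma quot_const (N r dN dr : R -> R) : (forall t, is_derive N t (dN t)) -> (forall t, is_derive r t (dr t)) ->
  (forall t, r t <> 0) -> (forall t, (dN t * r t - N t * dr t) / r t ^ 2 = 0) ->
  forall t, N t / r t = N 0 / r 0.
Proof.
  intros HN Hr Hr0 Hz t.
  apply (const_deriv (fun t => N t / r t)). intro x.
  rewrite <- (Hz x). apply is_derive_div; auto.
Qed.

Ltac req := match goal with |- @eq _ ?a ?b => change (@eq R a b) end.

Ltac exd := repeat (match goal with |- _ /\ _ => split | |- True => exact I | |- ex_derive _ _ => eexists; eassumption end).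


Lemma main_rest (V : R -> R) (T : R) (u1 u2 : R -> R) :
  0 < T -> (forall t, continuous V t) -> (forall t, V (t + T) = V t) ->
  hill_sol V u1 -> hill_sol V u2 ->
  (forall t, u1 t * Derive u2 t - u2 t * Derive u1 t = 1) ->
  0 < u1 0 -> u2 0 = 0 ->
  (forall t, u1 (t + T) ^ 2 + u2 (t + T) ^ 2 = u1 t ^ 2 + u2 t ^ 2) ->
    (let w := fun t => sqrt (u1 t ^ 2 + u2 t ^ 2) in
    let thetaH := RInt (fun t => / (w t ^ 2)) 0 T in
    (forall t, 0 < w t) /\
    (forall t, w (t + T) = w t) /\
    ermakov_pinney_sol V w /\
    is_lim (fun t => 2 / t * RInt (fun s => / (u1 s ^ 2 + u2 s ^ 2)) 0 t)
           p_infty (2 * thetaH / T) /\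
    (forall phi : R -> R, torus_flow_sol V phi ->
       is_lim (fun t => (phi t - phi 0) / t) p_infty (2 * thetaH / T)) /\
    (T = 2 * PI ->
       2 * thetaH / T = RInt (fun t => / (u1 t ^ 2 + u2 t ^ 2)) 0 (2 * PI) / PI)).
Proof.
  intros HT HV HP Hu1 Hu2 W Hu10 Hu20 HSper w thetaH.
  assert (HS : forall t, 0 < u1 t ^ 2 + u2 t ^ 2).
  { intro t. specialize (W t). destruct (Req_dec (u1 t) 0) as [E1|E1].
    - destruct (Req_dec (u2 t) 0) as [E2|E2].
      + rewrite E1, E2 in W. lra.
      + assert (0 < u2 t ^ 2) by (apply pow2_gt_0; auto). nra.
    - assert (0 < u1 t ^ 2) by (apply pow2_gt_0; auto). nra. }
  assert (Hw2 : forall t, w t ^ 2 = u1 t ^ 2 + u2 t ^ 2) by (intro t; unfold w; apply pow2_sqrt; apply Rlt_le, HS).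
  assert (Hwp : forall t, 0 < w t) by (intro t; unfold w; apply sqrt_lt_R0, HS).
  assert (Hwd : forall t, is_derive w t ((u1 t * Derive u1 t + u2 t * Derive u2 t) / w t)).
  { intro t. destruct (Hu1 t) as [Ha _]; destruct (Hu2 t) as [Hc _].
    unfold w. auto_derive. exd; try apply HS.
    rewrite (is_derive_unique (fun y : R => u1 y) _ _ Ha), (is_derive_unique (fun y : R => u2 y) _ _ Hc).
    replace (u1 t * (u1 t * 1) + u2 t * (u2 t * 1)) with (u1 t ^ 2 + u2 t ^ 2) by ring.
    assert (Hwt := Hwp t); unfold w in Hwt; field; lra. }
  split; [exact Hwp|]. split.
  { intro t. unfold w. rewrite HSper. reflexivity. }
  split.
  { intro t. split.
    - rewrite (is_derive_unique _ _ _ (Hwd t)). apply Hwd.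
    - apply (is_derive_ext (fun t => (u1 t * Derive u1 t + u2 t * Derive u2 t) / w t)).
      { intro; symmetry; apply is_derive_unique, Hwd. }
      destruct (Hu1 t) as [Ha Hb]; destruct (Hu2 t) as [Hc Hd].
      assert (HP' : is_derive (fun t => u1 t * Derive u1 t + u2 t * Derive u2 t) t
         (Derive u1 t * Derive u1 t + u1 t * (- (V t * u1 t)) + (Derive u2 t * Derive u2 t + u2 t * (- (V t * u2 t))))).
      { auto_derive. exd.
        rewrite (is_derive_unique (fun y : R => u1 y) _ _ Ha), (is_derive_unique (fun y : R => Derive u1 y) _ _ Hb),
          (is_derive_unique (fun y : R => u2 y) _ _ Hc), (is_derive_unique (fun y : R => Derive u2 y) _ _ Hd). ring. }
      assert (E := is_derive_div _ _ t _ _ HP' (Hwd t) (Rgt_not_eq _ _ (Hwp t))).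
      apply (is_derive_eq _ _ _ _ E).
      apply EP_alg; auto. }
  set (f := fun s => / (u1 s ^ 2 + u2 s ^ 2)).
  assert (Hfc : forall t, continuous f t).
  { intro t. apply ex_cont. destruct (Hu1 t) as [Ha _]; destruct (Hu2 t) as [Hc _].
    unfold f. auto_derive. exd. apply Rgt_not_eq, HS. }
  assert (Hfp : forall t, 0 < f t) by (intro t; apply Rinv_0_lt_compat, HS).
  set (F := fun t => RInt f 0 t).
  assert (HFd : forall t, is_derive F t (f t)) by (apply deriv_RInt, Hfc).
  assert (HF0 : F 0 = 0) by (apply RInt0).
  assert (Hth : thetaH = F T).
  { unfold thetaH, F. apply RInt_ext. intros x _. unfold f. rewrite Hw2. reflexivity. }
  assert (HfP : forall t, f (t + T) = f t) by (intro t; unfold f; rewrite HSper; reflexivity).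
  assert (HFP : forall t, F (t + T) = F t + F T).
  { assert (Hz : forall t, is_derive (fun t => F (t + T) - F t) t 0).
    { intro t. apply (is_derive_eq _ _ (f (t + T) - f t)).
      apply (is_derive_minus (fun t => F (t + T)) F). apply (deriv_shift F f T HFd). apply HFd.
      rewrite HfP. apply Rminus_diag_eq. reflexivity. }
    intro t. assert (E := const_deriv _ Hz t 0). simpl in E. rewrite Rplus_0_l, HF0 in E. lra. }
  assert (HFm : forall t, 0 <= t <= T -> 0 <= F t <= F T).
  { intros t Ht. split.
    - rewrite <- HF0. apply (mono_le F f 0 t); try lra. intros; apply HFd. intros; apply Rlt_le, Hfp.
    - apply (mono_le F f t T); try lra. intros; apply HFd. intros; apply Rlt_le, Hfp. }
  assert (HFT : 0 <= F T) by (apply (HFm T); lra).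
  assert (HFb := periodic_bound F T (F T) HT HFT HF0 HFP HFm).
  rewrite Hth.
  split.
  { apply (is_lim_ext (fun t => (2 * F t) / t)).
    { intro y. unfold F, f. unfold Rdiv. ring. }
    apply (lim_lin _ _ (2 * F T)). intros t Ht. specialize (HFb t Ht).
    replace (2 * F t - 2 * F T / T * t) with (2 * (F t - F T / T * t)) by (field; lra).
    rewrite Rabs_mult, (Rabs_right 2) by lra. lra. }
  split.
  2: { intro ET. unfold F, f. subst T. field. apply PI_neq0. }
  intros phi Hphi.
  assert (HFD : forall t, Derive F t = f t) by (intro t; apply is_derive_unique, HFd).
  set (A1 := fun t => u1 t * cos (F t) + u2 t * sin (F t)).
  set (B1 := fun t => -u1 t * sin (F t) + u2 t * cos (F t)).
  set (dA1 := fun t => Derive u1 t * cos (F t) + Derive u2 t * sin (F t) + (-u1 t * sin (F t) + u2 t * cos (F t)) / (u1 t^2 + u2 t^2)).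
  set (dB1 := fun t => - Derive u1 t * sin (F t) + Derive u2 t * cos (F t) - (u1 t * cos (F t) + u2 t * sin (F t)) / (u1 t^2 + u2 t^2)).
  set (dw := fun t => (u1 t * Derive u1 t + u2 t * Derive u2 t) / w t).
  assert (HA1d : forall t, is_derive A1 t (dA1 t)).
  { intro t. destruct (Hu1 t) as [Ha _]; destruct (Hu2 t) as [Hc _].
    unfold A1, dA1. auto_derive. repeat split; try (eexists; eassumption); try (eexists; apply HFd).
    rewrite (is_derive_unique (fun y : R => u1 y) _ _ Ha), (is_derive_unique (fun y : R => u2 y) _ _ Hc).
    change (Derive (fun y : R => F y) t) with (Derive F t). rewrite HFD. unfold f. field. apply Rgt_not_eq, HS. }
  assert (HB1d : forall t, is_derive B1 t (dB1 t)).
  { intro t. destruct (Hu1 t) as [Ha _]; destruct (Hu2 t) as [Hc _].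
    unfold B1, dB1. auto_derive. repeat split; try (eexists; eassumption); try (eexists; apply HFd).
    rewrite (is_derive_unique (fun y : R => u1 y) _ _ Ha), (is_derive_unique (fun y : R => u2 y) _ _ Hc).
    change (Derive (fun y : R => F y) t) with (Derive F t). rewrite HFD. unfold f. field. apply Rgt_not_eq, HS. }
  assert (Hw0 : w 0 = u1 0) by (unfold w; rewrite Hu20; replace (u1 0 ^ 2 + 0 ^ 2) with (u1 0 ^ 2) by ring; apply sqrt_pow2; lra).
  assert (HA1 : forall t, A1 t / w t = 1).
  { intro t. rewrite (quot_const A1 w dA1 dw HA1d Hwd (fun t => Rgt_not_eq _ _ (Hwp t))).
    - unfold A1. rewrite HF0, cos_0, sin_0, Hu20, Hw0. field. lra.
    - intro x. unfold dA1, dw, A1. apply (proj1 (lift_alg _ _ _ _ _ _ _ (Hwp x) (Hw2 x) (W x))). }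
  assert (HB1 : forall t, B1 t / w t = 0).
  { intro t. rewrite (quot_const B1 w dB1 dw HB1d Hwd (fun t => Rgt_not_eq _ _ (Hwp t))).
    - unfold B1. rewrite HF0, cos_0, sin_0, Hu20, Hw0. field. lra.
    - intro x. unfold dB1, dw, B1. apply (proj2 (lift_alg _ _ _ _ _ _ _ (Hwp x) (Hw2 x) (W x))). }
  assert (Hl1 : forall t, u1 t = w t * cos (F t) /\ u2 t = w t * sin (F t)).
  { intro t. assert (Hwt := Hwp t).
    assert (Ea : A1 t = w t).
    { specialize (HA1 t). replace (A1 t) with (A1 t / w t * w t) by (field; lra). rewrite HA1; ring. }
    assert (Eb : B1 t = 0).
    { specialize (HB1 t). replace (B1 t) with (B1 t / w t * w t) by (field; lra). rewrite HB1; ring. }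
    assert (Hcs := sin2_cos2 (F t)). unfold Rsqr in Hcs. unfold A1 in Ea. unfold B1 in Eb.
    split.
    - rewrite <- Ea. transitivity (u1 t * (sin (F t) * sin (F t) + cos (F t) * cos (F t)) + 0 * sin (F t)).
      rewrite Hcs; ring. rewrite <- Eb. ring.
    - rewrite <- Ea. transitivity (u2 t * (sin (F t) * sin (F t) + cos (F t) * cos (F t)) - 0 * cos (F t)).
      rewrite Hcs; ring. rewrite <- Eb. ring. }
  (* angle of (u1, -u1') *)
  assert (HQ : forall t, 0 < u1 t ^ 2 + Derive u1 t ^ 2).
  { intro t. specialize (W t). destruct (Req_dec (u1 t) 0) as [E1|E1].
    - destruct (Req_dec (Derive u1 t) 0) as [E2|E2].
      + rewrite E1, E2 in W. lra.
      + assert (0 < Derive u1 t ^ 2) by (apply pow2_gt_0; auto). nra.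
    - assert (0 < u1 t ^ 2) by (apply pow2_gt_0; auto). nra. }
  set (h := fun t => (V t * u1 t ^ 2 + Derive u1 t ^ 2) / (u1 t ^ 2 + Derive u1 t ^ 2)).
  assert (Hhc : forall t, continuous h t).
  { intro t. destruct (Hu1 t) as [Ha Hb].
    apply (continuous_ext (fun t => V t * (u1 t ^ 2 / (u1 t ^ 2 + Derive u1 t ^ 2)) + (Derive u1 t ^ 2 / (u1 t ^ 2 + Derive u1 t ^ 2)))).
    { intro x. unfold h. change (@eq R (V x * (u1 x ^ 2 / (u1 x ^ 2 + Derive u1 x ^ 2)) + Derive u1 x ^ 2 / (u1 x ^ 2 + Derive u1 x ^ 2)) ((V x * u1 x ^ 2 + Derive u1 x ^ 2) / (u1 x ^ 2 + Derive u1 x ^ 2))). field. apply Rgt_not_eq, HQ. }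
    apply cont_plus. apply cont_mult. apply HV.
    - apply ex_cont. auto_derive. exd; try (apply Rgt_not_eq, HQ).
    - apply ex_cont. auto_derive. exd; try (apply Rgt_not_eq, HQ). }
  set (th0 := atan (- Derive u1 0 / u1 0)).
  set (Th := fun t => th0 + RInt h 0 t).
  assert (HThd : forall t, is_derive Th t (h t)).
  { intro t. apply (is_derive_eq _ _ (plus 0 (h t))).
    apply (is_derive_plus (fun _ => th0) (fun t => RInt h 0 t)). auto_derive; auto.
    apply deriv_RInt, Hhc. unfold plus; simpl; apply Rplus_0_l. }
  assert (HTh0 : Th 0 = th0) by (unfold Th; rewrite RInt0; ring).
  assert (HThD : forall t, Derive Th t = h t) by (intro t; apply is_derive_unique, HThd).
  set (Rr := fun t => sqrt (u1 t ^ 2 + Derive u1 t ^ 2)).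
  assert (HRp : forall t, 0 < Rr t) by (intro t; apply sqrt_lt_R0, HQ).
  assert (HR2 : forall t, Rr t ^ 2 = u1 t ^ 2 + Derive u1 t ^ 2) by (intro t; apply pow2_sqrt, Rlt_le, HQ).
  set (dR := fun t => (u1 t * Derive u1 t + Derive u1 t * (- (V t * u1 t))) / Rr t).
  assert (HRd : forall t, is_derive Rr t (dR t)).
  { intro t. destruct (Hu1 t) as [Ha Hb].
    unfold Rr, dR. auto_derive. exd; try apply HQ.
    rewrite (is_derive_unique (fun y : R => u1 y) _ _ Ha), (is_derive_unique (fun y : R => Derive u1 y) _ _ Hb).
    replace (u1 t * (u1 t * 1) + Derive u1 t * (Derive u1 t * 1)) with (u1 t ^ 2 + Derive u1 t ^ 2) by ring.
    assert (Hrt := HRp t); unfold Rr in Hrt |- *. field; lra. }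
  set (A := fun t => u1 t * cos (Th t) - Derive u1 t * sin (Th t)).
  set (B := fun t => u1 t * sin (Th t) + Derive u1 t * cos (Th t)).
  set (dA := fun t => Derive u1 t * cos (Th t) - u1 t * sin (Th t) * h t + V t * u1 t * sin (Th t) - Derive u1 t * cos (Th t) * h t).
  set (dB := fun t => Derive u1 t * sin (Th t) + u1 t * cos (Th t) * h t - V t * u1 t * cos (Th t) - Derive u1 t * sin (Th t) * h t).
  assert (HAd : forall t, is_derive A t (dA t)).
  { intro t. destruct (Hu1 t) as [Ha Hb].
    unfold A, dA. auto_derive. repeat split; try (eexists; eassumption); try (eexists; apply HThd).
    rewrite (is_derive_unique (fun y : R => u1 y) _ _ Ha), (is_derive_unique (fun y : R => Derive u1 y) _ _ Hb).
    change (Derive (fun y : R => Th y) t) with (Derive Th t). rewrite HThD. ring. }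
  assert (HBd : forall t, is_derive B t (dB t)).
  { intro t. destruct (Hu1 t) as [Ha Hb].
    unfold B, dB. auto_derive. repeat split; try (eexists; eassumption); try (eexists; apply HThd).
    rewrite (is_derive_unique (fun y : R => u1 y) _ _ Ha), (is_derive_unique (fun y : R => Derive u1 y) _ _ Hb).
    change (Derive (fun y : R => Th y) t) with (Derive Th t). rewrite HThD. ring. }
  set (z := - Derive u1 0 / u1 0).
  assert (Hsig : 0 < sqrt (1 + z²)) by (apply sqrt_lt_R0; unfold Rsqr; nra).
  assert (Hsig2 : sqrt (1 + z²) * sqrt (1 + z²) = 1 + z²) by (apply sqrt_sqrt; unfold Rsqr; nra).
  assert (HR0 : Rr 0 = u1 0 * sqrt (1 + z²)).
  { unfold Rr. rewrite <- (sqrt_pow2 (u1 0 * sqrt (1 + z²))) by nra. f_equal.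
    replace ((u1 0 * sqrt (1 + z²))^2) with (u1 0 ^ 2 * (sqrt (1 + z²) * sqrt (1 + z²))) by ring.
    rewrite Hsig2. unfold z, Rsqr. field. lra. }
  assert (HA : forall t, A t / Rr t = 1).
  { intro t. rewrite (quot_const A Rr dA dR HAd HRd (fun t => Rgt_not_eq _ _ (HRp t))).
    - unfold A. rewrite HTh0. unfold th0. fold z. rewrite cos_atan, sin_atan, HR0.
      replace ((u1 0 * (1 / sqrt (1 + z²)) - Derive u1 0 * (z / sqrt (1 + z²))) / (u1 0 * sqrt (1 + z²)))
        with ((u1 0 - Derive u1 0 * z) / (u1 0 * (sqrt (1 + z²) * sqrt (1 + z²)))) by (field; lra).
      rewrite Hsig2. unfold z, Rsqr. field. split; [lra|]. assert (Hq := HQ 0). nra.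
    - intro x. unfold dA, dR, A. apply (proj1 (lift2_alg _ _ _ _ _ _ (HRp x) (HR2 x))). }
  assert (HB : forall t, B t / Rr t = 0).
  { intro t. rewrite (quot_const B Rr dB dR HBd HRd (fun t => Rgt_not_eq _ _ (HRp t))).
    - unfold B. rewrite HTh0. unfold th0. fold z. rewrite cos_atan, sin_atan.
      assert (Ez : u1 0 * z = - Derive u1 0) by (unfold z; field; lra).
      replace (u1 0 * (z / sqrt (1 + z²)) + Derive u1 0 * (1 / sqrt (1 + z²))) with ((u1 0 * z + Derive u1 0) / sqrt (1+z²)) by (field; lra).
      rewrite Ez. unfold Rdiv. ring.
    - intro x. unfold dB, dR, B. apply (proj2 (lift2_alg _ _ _ _ _ _ (HRp x) (HR2 x))). }
  assert (HcTh : forall t, u1 t = Rr t * cos (Th t) /\ Derive u1 t = - Rr t * sin (Th t)).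
  { intro t. assert (Hrt := HRp t).
    assert (Ea : A t = Rr t).
    { specialize (HA t). replace (A t) with (A t / Rr t * Rr t) by (field; lra). rewrite HA; ring. }
    assert (Eb : B t = 0).
    { specialize (HB t). replace (B t) with (B t / Rr t * Rr t) by (field; lra). rewrite HB; ring. }
    assert (Hcs := sin2_cos2 (Th t)). unfold Rsqr in Hcs. unfold A in Ea. unfold B in Eb.
    split.
    - rewrite <- Ea. transitivity (u1 t * (sin (Th t) * sin (Th t) + cos (Th t) * cos (Th t)) - 0 * sin (Th t)).
      rewrite Hcs; ring. rewrite <- Eb. ring.
    - rewrite <- Ea. transitivity (Derive u1 t * (sin (Th t) * sin (Th t) + cos (Th t) * cos (Th t)) - 0 * cos (Th t)).
      rewrite Hcs; ring. rewrite <- Eb. ring. }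
  set (chi := fun t => 2 * Th t).
  assert (Hchi : torus_flow_sol V chi).
  { intro t. apply (is_derive_eq _ _ (2 * h t)). apply (is_derive_scal Th). apply HThd.
    unfold chi. req. rewrite cos_2a. destruct (HcTh t) as [E1 E2]. unfold h. rewrite E1, E2.
    assert (Hcs := sin2_cos2 (Th t)). unfold Rsqr in Hcs. assert (Hrt := HRp t).
    replace ((Rr t * cos (Th t)) ^ 2 + (- Rr t * sin (Th t)) ^ 2) with (Rr t ^ 2)
      by (transitivity (Rr t ^2 * (sin (Th t) * sin (Th t) + cos (Th t) * cos (Th t))); [rewrite Hcs; ring | ring]).
    replace (2 * ((V t * (Rr t * cos (Th t)) ^ 2 + (- Rr t * sin (Th t)) ^ 2) / Rr t ^ 2))
      with (2 * (V t * cos (Th t) * cos (Th t) + sin (Th t) * sin (Th t))) by (field; lra).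
    transitivity ((V t + 1) * (sin (Th t) * sin (Th t) + cos (Th t) * cos (Th t)) + (V t - 1) * (cos (Th t) * cos (Th t) - sin (Th t) * sin (Th t))).
    ring. rewrite Hcs. ring. }
  (* the two angles stay within PI *)
  set (dd := fun t => Th t - F t).
  assert (Hddd : forall t, is_derive dd t (h t - f t)) by (intro t; apply (is_derive_minus Th F); [apply HThd | apply HFd]).
  assert (Hddc : continuity dd) by (intro x; apply (deriv_cont_pt _ _ _ (Hddd x))).
  assert (Hdd0 : - PI / 2 < dd 0 < PI / 2) by (unfold dd; rewrite HTh0, HF0, Rminus_0_r; apply atan_bound).
  assert (Hnot : forall zz, cos (Th zz) = - cos (F zz) -> sin (Th zz) = - sin (F zz) -> False).
  { intros zz Hc Hs. destruct (Hl1 zz) as [L1 L2]. destruct (HcTh zz) as [T1 T2].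
    assert (Hwz := Hwp zz). assert (Hrz := HRp zz). assert (Wz := W zz).
    assert (E : (w zz + Rr zz) * cos (F zz) = 0).
    { replace ((w zz + Rr zz) * cos (F zz)) with (w zz * cos (F zz) - Rr zz * (- cos (F zz))) by ring.
      rewrite <- Hc, <- L1, <- T1. ring. }
    apply Rmult_integral in E. destruct E as [E|E]; [lra|].
    rewrite L1, E, L2, T2, Hs in Wz.
    assert (0 <= w zz * Rr zz * (sin (F zz) * sin (F zz))).
    { apply Rmult_le_pos. apply Rmult_le_pos; lra. apply Rle_0_sqr. }
    assert (w zz * 0 * Derive u2 zz - w zz * sin (F zz) * (- Rr zz * - sin (F zz)) = - (w zz * Rr zz * (sin (F zz) * sin (F zz)))) by ring.
    lra. }
  assert (Hdb : forall t, 0 <= t -> Rabs (dd t) < PI).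
  { intros t Ht. assert (HPI := PI_RGT_0). apply Rabs_def1.
    - destruct (Rlt_le_dec (dd t) PI) as [|Hge]; auto. exfalso.
      assert (Hz : exists zz, dd zz = PI).
      { destruct (Req_dec (dd t) PI) as [E|NE]. exists t; auto.
        assert (0 < t) by (destruct (Req_dec t 0) as [E|]; [subst; lra | lra]).
        destruct (IVT (fun x => dd x - PI) 0 t) as [zz [_ Hz]]; auto.
        + intro x. apply continuity_pt_minus. apply Hddc. apply continuity_pt_const. intros a b; reflexivity.
        + lra.
        + lra.
        + exists zz; lra. }
      destruct Hz as [zz Hz]. apply (Hnot zz).
      + replace (Th zz) with (F zz + PI) by (unfold dd in Hz; lra). apply neg_cos.
      + replace (Th zz) with (F zz + PI) by (unfold dd in Hz; lra). apply neg_sin.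
    - destruct (Rlt_le_dec (- PI) (dd t)) as [|Hge]; auto. exfalso.
      assert (Hz : exists zz, dd zz = - PI).
      { destruct (Req_dec (dd t) (- PI)) as [E|NE]. exists t; auto.
        assert (0 < t) by (destruct (Req_dec t 0) as [E|]; [subst; lra | lra]).
        destruct (IVT (fun x => - dd x - PI) 0 t) as [zz [_ Hz]]; auto.
        + intro x. apply continuity_pt_minus. apply continuity_pt_opp. apply Hddc. apply continuity_pt_const. intros a b; reflexivity.
        + lra.
        + lra.
        + exists zz; lra. }
      destruct Hz as [zz Hz]. apply (Hnot zz).
      + replace (F zz) with (Th zz + PI) by (unfold dd in Hz; lra). rewrite neg_cos. ring.
      + replace (F zz) with (Th zz + PI) by (unfold dd in Hz; lra). rewrite neg_sin. ring. }
  assert (H2PI : 0 < 2 * PI) by (assert (HPI := PI_RGT_0); lra).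
  destruct (INR_archimed (2 * PI) (Rabs (phi 0 - chi 0)) H2PI) as [n Hn].
  assert (Hup : forall t, 0 <= t -> phi t < chi t + 2 * INR n * PI).
  { apply (torus_nc V phi (fun t => chi t + 2 * INR n * PI) HV Hphi (torus_shift V chi n Hchi)).
    assert (phi 0 - chi 0 <= Rabs (phi 0 - chi 0)) by apply Rle_abs. lra. }
  assert (Hlo : forall t, 0 <= t -> chi t < phi t + 2 * INR n * PI).
  { apply (torus_nc V chi (fun t => phi t + 2 * INR n * PI) HV Hchi (torus_shift V phi n Hphi)).
    assert (- (phi 0 - chi 0) <= Rabs (phi 0 - chi 0)) by apply Rabs_maj2. lra. }
  apply (lim_lin (fun t => phi t - phi 0) _ (2 * INR n * PI + 2 * PI + 2 * INR n * PI + Rabs (chi 0) + 2 * F T)).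
  intros t Ht. apply Rabs_le.
  specialize (Hup t Ht). specialize (Hlo t Ht). specialize (Hdb t Ht). specialize (HFb t Ht).
  apply Rabs_def2 in Hdb.
  assert (F t - F T / T * t <= Rabs (F t - F T / T * t)) by apply Rle_abs.
  assert (- (F t - F T / T * t) <= Rabs (F t - F T / T * t)) by apply Rabs_maj2.
  assert (chi 0 <= Rabs (chi 0)) by apply Rle_abs.
  assert (- chi 0 <= Rabs (chi 0)) by apply Rabs_maj2.
  assert (phi 0 - chi 0 <= Rabs (phi 0 - chi 0)) by apply Rle_abs.
  assert (- (phi 0 - chi 0) <= Rabs (phi 0 - chi 0)) by apply Rabs_maj2.
  assert (Hchi0 : chi 0 = 2 * dd 0) by (unfold chi, dd; rewrite HF0; ring).
  assert (Hchit : chi t = 2 * dd t + 2 * F t) by (unfold chi, dd; ring).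
  unfold dd in Hchi0, Hchit.
  unfold dd in Hdb.
  split; lra.
Qed.


Theorem mainTheorem5 (V : R -> R) (T : R) :
  0 < T ->
  (forall t, continuous V t) ->
  (forall t, V (t + T) = V t) ->
  monodromy_elliptic V T ->
  exists u1 u2 : R -> R,
    hill_sol V u1 /\ hill_sol V u2 /\
    (forall t, u1 t * Derive u2 t - u2 t * Derive u1 t = 1) /\
    let w := fun t => sqrt (u1 t ^ 2 + u2 t ^ 2) in
    let thetaH := RInt (fun t => / (w t ^ 2)) 0 T in
    (forall t, 0 < w t) /\
    (forall t, w (t + T) = w t) /\
    ermakov_pinney_sol V w /\
    is_lim (fun t => 2 / t * RInt (fun s => / (u1 s ^ 2 + u2 s ^ 2)) 0 t)
           p_infty (2 * thetaH / T) /\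
    (forall phi : R -> R, torus_flow_sol V phi ->
       is_lim (fun t => (phi t - phi 0) / t) p_infty (2 * thetaH / T)) /\
    (T = 2 * PI ->
       2 * thetaH / T = RInt (fun t => / (u1 t ^ 2 + u2 t ^ 2)) 0 (2 * PI) / PI).
Proof.
  intros HT HV HP [y1 [y2 [H1 [H2 [y10 [dy10 [y20 [dy20 Htr]]]]]]]].
  assert (W0 : forall t, y1 t * Derive y2 t - y2 t * Derive y1 t = 1).
  { assert (HW : forall x, is_derive (fun t => y1 t * Derive y2 t - y2 t * Derive y1 t) x 0).
    2: { intro t. rewrite (const_deriv _ HW t 0). rewrite y10, dy10, y20, dy20. ring. }
    intro x. destruct (H1 x) as [Ha Hb]; destruct (H2 x) as [Hc Hd].
    auto_derive. exd.
    rewrite (is_derive_unique (fun y : R => y1 y) _ _ Ha), (is_derive_unique (fun y : R => Derive y1 y) _ _ Hb),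
      (is_derive_unique (fun y : R => y2 y) _ _ Hc), (is_derive_unique (fun y : R => Derive y2 y) _ _ Hd). ring. }
  set (a := y1 T). set (b := y2 T). set (c := Derive y1 T). set (d := Derive y2 T).
  assert (Htr' : Rabs (a + d) < 2) by (unfold a, d; exact Htr).
  assert (Hdet : a * d - b * c = 1) by (rewrite <- (W0 T); unfold a, b, c, d; ring).
  assert (Hs1 : forall t, y1 (t + T) = a * y1 t + c * y2 t).
  { destruct (hill_comb V y1 y2 a c H1 H2) as [Dc Hc].
    destruct (hill_shift V y1 T HP H1) as [Ds Hs].
    destruct (hill_comb V _ _ 1 (-1) Hs Hc) as [De He].
    intro t. assert (E := hill_unique V _ HV He).
    simpl in E. rewrite De, Ds, Dc in E. specialize (E ltac:(rewrite y10, y20; unfold a; rewrite Rplus_0_l; ring)).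
    specialize (E ltac:(rewrite dy10, dy20, Rplus_0_l; unfold c; ring) t). lra. }
  assert (Hs2 : forall t, y2 (t + T) = b * y1 t + d * y2 t).
  { destruct (hill_comb V y1 y2 b d H1 H2) as [Dc Hc].
    destruct (hill_shift V y2 T HP H2) as [Ds Hs].
    destruct (hill_comb V _ _ 1 (-1) Hs Hc) as [De He].
    intro t. assert (E := hill_unique V _ HV He).
    simpl in E. rewrite De, Ds, Dc in E. specialize (E ltac:(rewrite y10, y20; unfold b; rewrite Rplus_0_l; ring)).
    specialize (E ltac:(rewrite dy10, dy20, Rplus_0_l; unfold d; ring) t). lra. }
  clearbody a b c d.
  assert (Hm : ((a+d)/2)^2 < 1).
  { apply Rabs_def2 in Htr'. nra. }
  assert (Hb0 : b <> 0).
  { intro E. rewrite E in Hdet. apply Rabs_def2 in Htr'.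
    assert (0 <= (a-d)^2) by apply pow2_ge_0. nra. }
  assert (Hsq : 0 < sqrt (1 - ((a+d)/2)^2)) by (apply sqrt_lt_R0; lra).
  assert (Hsq2 : sqrt (1 - ((a+d)/2)^2) ^ 2 = 1 - ((a+d)/2)^2) by (apply pow2_sqrt; lra).
  assert (Hex : exists s, s^2 = 1 - ((a+d)/2)^2 /\ s * b < 0).
  { destruct (Rlt_dec 0 b).
    - exists (- sqrt (1 - ((a+d)/2)^2)). split. rewrite <- Hsq2 at 2; ring. nra.
    - exists (sqrt (1 - ((a+d)/2)^2)). split. auto. assert (b < 0) by lra. nra. }
  destruct Hex as [s [Hss Hsb]].
  assert (Hs0 : s <> 0) by (intro E; rewrite E in Hsb; lra).
  assert (Hsb' : 0 < - s / b).
  { replace (- s / b) with (- (s * b) / (b * b)) by (field; auto).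
    apply Rdiv_lt_0_compat. lra. assert (0 <= b*b) by nra. destruct (Req_dec (b*b) 0); [exfalso; apply Hb0; nra | lra]. }
  set (k := sqrt (- s / b)).
  assert (Hk0 : 0 < k) by (apply sqrt_lt_R0; auto).
  assert (Hk2 : k^2 * b = - s) by (unfold k; rewrite pow2_sqrt by lra; field; auto).
  clearbody k.
  set (p := -k*b/s). set (q := k*(a-d)/(2*s)).
  assert (Hpk : p * k = 1) by (unfold p; replace (- k * b / s * k) with (-(k^2*b)/s) by (field; auto); rewrite Hk2; field; auto).
  assert (Hp0 : 0 < p).
  { assert (0 < p * k) by lra. apply (Rmult_lt_reg_r k); lra. }
  destruct (hill_comb V y1 y2 p q H1 H2) as [Du1 Hu1].
  destruct (hill_comb V y1 y2 0 k H1 H2) as [Du2 Hu2].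
  apply (ex_intro _ (fun t => p * y1 t + q * y2 t)).
  apply (ex_intro _ (fun t => 0 * y1 t + k * y2 t)).
  assert (Wu : forall t, (p * y1 t + q * y2 t) * Derive (fun t => 0 * y1 t + k * y2 t) t - (0 * y1 t + k * y2 t) * Derive (fun t => p * y1 t + q * y2 t) t = 1).
  { intro t. rewrite Du1, Du2. transitivity (p*k*(y1 t * Derive y2 t - y2 t * Derive y1 t)). ring. rewrite W0, Hpk; ring. }
  split; [exact Hu1|]. split; [exact Hu2|]. split; [exact Wu|].
  apply main_rest; auto.
  - rewrite y10, y20. lra.
  - rewrite y20; ring.
  - intro t. rewrite Hs1, Hs2. unfold p, q. apply floq_alg; auto.
Qed.
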